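(* Assume hypotheses (A1)–(A4) below. Let $\sigma_n\to\infty$ and $h_n\to0$ (with $h_n\in(0,h_0]$) as $n\to\infty$. Then the functionals $\mathcal E_{\sigma_n,h_n}$ $\Gamma$-converge as $n\to\infty$ in the strong topology of $\mathcal T_0$ to $\overline{\mathcal E}_\infty$.
   Context: Let $\{\mathcal T_\sigma\}_{\sigma\in\mathbb R\cup\{\pm\infty\}}$ be reflexive Banach spaces with norms $\|\cdot\|_{\mathcal T_\sigma}$, $\mathcal T_{-\sigma}:=\mathcal T_\sigma^*$, and $\mathcal T_\sigma\subset\mathcal T_0$ for $\sigma\in(0,\infty]$. Limits ''as $\sigma\to\infty$'' refer to arbitrary sequences $\sigma_n\to\infty$. (A1) (i) There is $M_1>0$ independent of $\sigma$ with $M_1\|u\|_{\mathcal T_0}\le\|u\|_{\mathcal T_\sigma}$ for all $\sigma\in(0,\infty]$, $u\in\mathcal T_\sigma$. (ii) If $v_\sigma\in\mathcal T_\sigma$ with $\|v_\sigma\|_{\mathcal T_\sigma}\le C$ ($C$ independent of $\sigma$), then $\{v_\sigma\}$ is relatively compact in $\mathcal T_0$ as $\sigma\to\infty$ and each limit point lies in $\mathcal T_\infty$. (A2) For each $\sigma\in(0,\infty]$, $\mathcal E_\sigma:\mathcal T_\sigma\to[0,\infty)$ is weakly lower semicontinuous on $\mathcal T_\sigma$, and: (i) there is $\varphi\in C^0([0,\infty)^2)$ with $|\mathcal E_\sigma(u)-\mathcal E_\sigma(v)|\le\varphi(\|u\|_{\mathcal T_\sigma},\|v\|_{\mathcal T_\sigma})\|u-v\|_{\mathcal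 T_\sigma}$ for all $u,v\in\mathcal T_\sigma$; (ii) there exist $p\in(1,\infty)$, $\alpha>0$, $\psi\in C^0([0,\infty))$ with $\psi(t)/t^p\to0$ as $t\to\infty$, independent of $\sigma$, with $\alpha\|u\|^p_{\mathcal T_\sigma}\le\mathcal E_\sigma(u)+\psi(\|u\|_{\mathcal T_\sigma})$. (A3) With $\overline{\mathcal E}_\sigma:\mathcal T_0\to[0,\infty]$ equal to $\mathcal E_\sigma$ on $\mathcal T_\sigma$ and $+\infty$ on $\mathcal T_0\setminus\mathcal T_\sigma$ ($\sigma\in(0,\infty]$), $\overline{\mathcal E}_\sigma$ $\Gamma$-converges to $\overline{\mathcal E}_\infty$ as $\sigma\to\infty$ in the strong topology of $\mathcal T_0$. (A4) For $\sigma\in(0,\infty]$, $h\in(0,h_0]$, $W_{\sigma,h}\subset\mathcal T_\sigma$ are finite-dimensional subspaces such that for each $h$ the span of $\bigcup_{\sigma\in(0,\infty]}W_{\sigma,h}$ is finite-dimensional, and: (i) for every $\sigma\in(0,\infty]$ and $u\in\mathcal T_\sigma$ there exist $h_n\to0$ and $u_n\in W_{\sigma,h_n}$ with $\|u-u_n\|_{\mathcal T_\sigma}\to0$; (ii) for each $h\in(0,h_0]$, $W_{\infty,h}=\mathcal T_\infty\cap\bigcup_{\sigma\in(0,\infty]}W_{\sigma,h}$; (iii) with $W_{\infty,0}:=\mathcal T_\infty$: for every $h\in[0,h_0]$, every $v\in W_{\infty,h}$ and every sequence $(\sigma_n,h_n)$ with $\sigma_n\to\infty$, $h_n\in(0,h_0]$,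 and $h_n=h$ for all $n$ if $h>0$, $h_n\to0$ if $h=0$, there exist $v_{\sigma_n}\in\mathcal T_{\sigma_n}$ with $\|v_{\sigma_n}-v\|_{\mathcal T_0}\to0$ and $\mathcal E_{\sigma_n}(v_{\sigma_n})\to\mathcal E_\infty(v)$, and $v_n\in W_{\sigma_n,h_n}$ with $\|v_n-v_{\sigma_n}\|_{\mathcal T_{\sigma_n}}\to0$. Define $\mathcal E_{\sigma,h}:\mathcal T_0\to[0,\infty]$ by $\mathcal E_{\sigma,h}=\mathcal E_\sigma$ on $W_{\sigma,h}$ and $+\infty$ on $\mathcal T_0\setminus W_{\sigma,h}$. $\Gamma$-convergence of $I_n$ to $I$ in a topology means: (1) $I(v)\le\liminf I_n(v_n)$ whenever $v_n\to v$; (2) for each $v$ there is $v_n\to v$ with $\limsup I_n(v_n)\le I(v)$. *)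

(* Defs.v *)
From HB Require Import structures.
From mathcomp Require Import all_boot all_order all_algebra.
From mathcomp Require Import all_classical all_reals all_analysis.
Set Implicit Arguments. Unset Strict Implicit. Unset Printing Implicit Defensive.
Import Order.TTheory GRing.Theory Num.Theory.
Import numFieldNormedType.Exports.
Local Open Scope classical_set_scope.
Local Open Scope ring_scope.

Section Defs.
Context {R : realType} {V : normedModType R}.

Definition normed_subspace (S : set V) (N : V -> R) : Prop :=
  [/\ S 0, (forall x y, S x -> S y -> S (x + y)) &
      (forall (a : R) x, S x -> S (a *: x))] /\
  [/\ (forall x, S x -> 0 <= N x /\ (N x = 0 -> x = 0)),
      (forall (a : R) x, S x -> N (a *: x) = `|a| * N x) &
      (forall x y, S x -> S y -> N (x + y) <= N x + N y)].

Definition nsub_complete (S : set V) (N : V -> R) : Prop :=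
  forall u : nat -> V, (forall n, S (u n)) ->
    (forall e : R, 0 < e -> exists m, forall n k, (m <= n)%N -> (m <= k)%N ->
        N (u n - u k) < e) ->
    exists2 x, S x & (fun n => N (u n - x)) @ \oo --> (0 : R).

Definition dual_bound (S : set V) (N : V -> R) (f : V -> R) (K : R) : Prop :=
  0 <= K /\ forall x, S x -> `|f x| <= K * N x.

(** Elements of the dual of (S, N): bounded linear functionals (represented
    by functions on V; only their values on S matter). *)
Definition dual_elt (S : set V) (N : V -> R) (f : V -> R) : Prop :=
  (forall x y, S x -> S y -> f (x + y) = f x + f y) /\
  (forall (a : R) x, S x -> f (a *: x) = a * f x) /\
  exists K, dual_bound S N f K.

(** Elements of the bidual: bounded linear functionals on the dual
    (boundedness w.r.t. the dual norm, which is the least dual bound). *)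
Definition bidual_elt (S : set V) (N : V -> R) (Phi : (V -> R) -> R) : Prop :=
  (forall f g, dual_elt S N f -> dual_elt S N g -> Phi (f \+ g) = Phi f + Phi g) /\
  (forall (a : R) f, dual_elt S N f -> Phi (fun x => a * f x) = a * Phi f) /\
  exists C, 0 <= C /\ forall f K, dual_elt S N f -> dual_bound S N f K ->
     `|Phi f| <= C * K.

Definition reflexive_banach (S : set V) (N : V -> R) : Prop :=
  [/\ normed_subspace S N, nsub_complete S N &
      forall Phi, bidual_elt S N Phi ->
        exists2 x, S x & forall f, dual_elt S N f -> Phi f = f x].

Definition weakly_lsc (S : set V) (N : V -> R) (E : V -> R) : Prop :=
  forall u, S u -> forall c, c < E u ->
    exists k (fs : 'I_k -> V -> R) (eps : R),
      [/\ 0 < eps, (forall i, dual_elt S N (fs i)) &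
          forall a, S a -> (forall i, `|fs i a - fs i u| < eps) -> c < E a].

Definition ext_inf (S : set V) (E : V -> R) : V -> \bar R :=
  fun u => if asbool (S u) then (E u)%:E else +oo%E.

Definition Gamma_conv (I : nat -> V -> \bar R) (J : V -> \bar R) : Prop :=
  (forall v (vn : nat -> V), vn @ \oo --> v ->
      (J v <= limn_einf (fun n => I n (vn n)))%E) /\
  (forall v, exists vn : nat -> V, vn @ \oo --> v /\
      (limn_esup (fun n => I n (vn n)) <= J v)%E).

Definition lspan (A : set V) : set V :=
  [set x | exists k (a : 'I_k -> V) (c : 'I_k -> R),
      (forall i, A (a i)) /\ x = \sum_(i < k) c i *: a i].

Definition fin_dim_subspace (W : set V) : Prop :=
  exists k (b : 'I_k -> V),
    W = [set x | exists c : 'I_k -> R, x = \sum_(i < k) c i *: b i].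

Definition to_infty (s : nat -> R) : Prop :=
  (forall n, 0 < s n) /\ s @ \oo --> +oo.

(** Indexing convention: spaces, norms, energies are indexed by
    sigma : \bar R; only sigma in (0, +oo] is used (sigma = +oo is T_oo);
    T_0 is V itself with its norm. *)

Definition A1 (T : \bar R -> set V) (N : \bar R -> V -> R) : Prop :=
  (exists2 M1 : R, 0 < M1 &
     forall s : \bar R, (0 < s)%E -> forall u, T s u -> M1 * `|u| <= N s u) /\
  (forall (C : R) (sg : nat -> R) (v : nat -> V), to_infty sg ->
     (forall n, T (sg n)%:E (v n)) -> (forall n, N (sg n)%:E (v n) <= C) ->
     (exists (phi : nat -> nat) (w : V),
        {homo phi : m n / (m < n)%N >-> (m < n)%N} /\ (v \o phi) @ \oo --> w) /\
     (forall (phi : nat -> nat) (w : V),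
        {homo phi : m n / (m < n)%N >-> (m < n)%N} -> (v \o phi) @ \oo --> w ->
        T +oo%E w)).

Definition A2 (T : \bar R -> set V) (N : \bar R -> V -> R)
    (E : \bar R -> V -> R) : Prop :=
  (forall s : \bar R, (0 < s)%E ->
     (forall u, T s u -> 0 <= E s u) /\ weakly_lsc (T s) (N s) (E s)) /\
  (exists phi : R * R -> R,
     {within [set p | 0 <= p.1 /\ 0 <= p.2], continuous phi} /\
     forall s : \bar R, (0 < s)%E -> forall u v, T s u -> T s v ->
       `|E s u - E s v| <= phi (N s u, N s v) * N s (u - v)) /\
  (exists (p alpha : R) (psi : R -> R),
     [/\ 1 < p, 0 < alpha, {within `[0, +oo[, continuous psi},
         (fun t => psi t / t `^ p) @ +oo --> (0 : R) &
         forall s : \bar R, (0 < s)%E -> forall u, T s u ->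
           alpha * N s u `^ p <= E s u + psi (N s u)]).

Definition A3 (T : \bar R -> set V) (E : \bar R -> V -> R) : Prop :=
  forall sg : nat -> R, to_infty sg ->
    Gamma_conv (fun n => ext_inf (T (sg n)%:E) (E (sg n)%:E))
               (ext_inf (T +oo%E) (E +oo%E)).

Definition A4 (T : \bar R -> set V) (N : \bar R -> V -> R)
    (E : \bar R -> V -> R) (W : \bar R -> R -> set V) (h0 : R) : Prop :=
  [/\ 0 < h0,
    (forall s : \bar R, (0 < s)%E -> forall h, 0 < h <= h0 ->
       fin_dim_subspace (W s h) /\ W s h `<=` T s) &
    (forall h, 0 < h <= h0 ->
       fin_dim_subspace (lspan (\bigcup_(s in [set s : \bar R | (0 < s)%E]) W s h)))] /\
  [/\
    (forall s : \bar R, (0 < s)%E -> forall u, T s u ->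
       exists (hn : nat -> R) (un : nat -> V),
         [/\ (forall n, 0 < hn n <= h0), hn @ \oo --> (0 : R),
             (forall n, W s (hn n) (un n)) &
             (fun n => N s (u - un n)) @ \oo --> (0 : R)]),
    (forall h, 0 < h <= h0 ->
       W +oo%E h = T +oo%E `&` \bigcup_(s in [set s : \bar R | (0 < s)%E]) W s h) &
    (forall (h : R) (v : V) (sg hn : nat -> R),
       0 <= h <= h0 ->
       (if h == 0 then T +oo%E v else W +oo%E h v) ->
       to_infty sg -> (forall n, 0 < hn n <= h0) ->
       (if h == 0 then hn @ \oo --> (0 : R) else forall n, hn n = h) ->
       exists vs vn : nat -> V,
         [/\ (forall n, T (sg n)%:E (vs n)),
             (fun n => `|vs n - v|) @ \oo --> (0 : R),
             (fun n => E (sg n)%:E (vs n)) @ \oo --> E +oo%E v,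
             (forall n, W (sg n)%:E (hn n) (vn n)) &
             (fun n => N (sg n)%:E (vn n - vs n)) @ \oo --> (0 : R)])].

Definition Edisc (W : set V) (E : V -> R) : V -> \bar R := ext_inf W E.

End Defs.

(* Main.v *)
Require Import Defs.
From HB Require Import structures.
From mathcomp Require Import all_boot all_order all_algebra.
From mathcomp Require Import all_classical all_reals all_analysis.
From mathcomp Require Import lra.
Import Order.TTheory GRing.Theory Num.Theory.
Import numFieldNormedType.Exports.
Local Open Scope classical_set_scope.
Local Open Scope ring_scope.

Lemma andP_intro (a b : bool) : a -> b -> a && b.
Proof. by move=> -> ->. Qed.

Lemma le_limn_einf (R : realType) (u v : (\bar R)^nat) :
  (forall n, (u n <= v n)%E) -> (limn_einf u <= limn_einf v)%E.
Proof.
move=> uv; rewrite !limn_einf_lim; apply: lee_lim; [exact: is_cvg_einfs|exact: is_cvg_einfs|].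
apply: nearW => n; apply: le_ereal_inf_tmp => _ [m /= nm <-].
apply: (le_trans _ (uv m)); apply: ereal_inf_lbound; by exists m.
Qed.

Lemma phi_bounded (R : realType) (phi : R * R -> R) (K : R) :
  {within [set p | 0 <= p.1 /\ 0 <= p.2], continuous phi} ->
  exists C : R, forall a b, 0 <= a <= K -> 0 <= b <= K -> phi (a, b) <= C.
Proof.
move=> cphi.
have cK : compact (`[0, K] `*` `[0, K] : set (R * R)).
  by apply: compact_setX; exact: segment_compact.
have sub : (`[0, K] `*` `[0, K] : set (R * R)) `<=` [set p | 0 <= p.1 /\ 0 <= p.2].
  by move=> [a b] /= []; rewrite !in_itv/= => /andP[a0 _] /andP[b0 _].
have := compact_bounded (continuous_compact (continuous_subspaceW sub cphi) cK).
move=> [M [_ HM]]; exists (M + 1) => a b Ha Hb.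
have Mlt : M < M + 1 by rewrite ltrDl.
have := HM (M + 1) Mlt (phi (a, b)).
move=> /(_ _)/= H; apply: le_trans (ler_norm _) (H _).
by exists (a, b) => //; split; rewrite /= in_itv/=.
Qed.

Lemma coerc_bound (R : realType) (p alpha B : R) (psi : R -> R) :
  1 < p -> 0 < alpha -> (fun t => psi t / t `^ p) @ +oo --> (0 : R) ->
  exists K, forall t, 0 <= t -> alpha * t `^ p <= B + psi t -> t <= K.
Proof.
move=> p1 a0 /cvgr0Pnorm_lt /(_ (alpha / 2)) [|M [Mr HM]]; first by lra.
exists (Num.max M (Num.max 1 (2 * B / alpha))) => t t0 H.
rewrite leNgt; apply/negP => /[dup] Kt.
rewrite !gt_max => /and3P[Mt t1 Bt].
have tp : t <= t `^ p.
  by rewrite -{1}(powRr1 t0) ler_powR //; [lra|lra].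
have tp0 : 0 < t `^ p by lra.
have := HM t Mt; rewrite normrM normfV (gtr0_norm tp0) ltr_pdivrMr // => Hpsi.
have Hpsi' : psi t < alpha / 2 * t `^ p by apply: le_lt_trans (ler_norm _) Hpsi.
rewrite ltr_pdivrMr // in Bt.
nra.
Qed.

Theorem theorem2p13 (R : realType) (V : normedModType R)
    (T : \bar R -> set V) (N : \bar R -> V -> R) (E : \bar R -> V -> R)
    (W : \bar R -> R -> set V) (h0 : R)
    (HT0 : reflexive_banach [set: V] (fun x : V => `|x|))
    (HT : forall s : \bar R, (0 < s)%E -> reflexive_banach (T s) (N s))
    (HA1 : A1 T N) (HA2 : A2 T N E) (HA3 : A3 T E) (HA4 : A4 T N E W h0)
    (sg hn : nat -> R) (Hsg : to_infty sg)
    (Hhn : forall n, 0 < hn n <= h0) (Hhn0 : hn @ \oo --> (0 : R)) :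
  Gamma_conv (fun n => Edisc (W (sg n)%:E (hn n)) (E (sg n)%:E))
             (ext_inf (T +oo%E) (E +oo%E)).
Proof.
have [[M1 M1pos HM1] _] := HA1.
have [HA2a [[phi [cphi Hphi]] [p [alpha [psi [p1 a0 cpsi psilim Hcoerc]]]]]] := HA2.
have [[h0pos HW _] [_ _ H4iii]] := HA4.
have [sgpos sgoo] := Hsg.
have sgE n : (0 < (sg n)%:E)%E by rewrite lte_fin.
split.
  move=> v vn cv; apply: le_trans ((HA3 sg Hsg).1 v vn cv) _.
  apply: le_limn_einf => n; rewrite /Edisc /ext_inf.
  case: (asboolP (W (sg n)%:E (hn n) (vn n))) => [w|_]; last exact: leey.
  by rewrite asboolT //; exact: ((HW _ (sgE n) (hn n) (Hhn n)).2 _ w).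
move=> v; case: (asboolP (T +oo%E v)) => Tv; last first.
  exists (fun=> v); split; first exact: cvg_cst.
  by rewrite /ext_inf asboolF //; exact: leey.
have h0b : (0 : R) <= 0 <= h0.
  by rewrite lexx (ltW h0pos).
have e1 : if (0 : R) == 0 then T +oo%E v else W +oo%E 0 v by rewrite eqxx.
have e2 : if (0 : R) == 0 then hn @ \oo --> (0 : R) else forall n, hn n = 0.
  by rewrite eqxx.
have [vs [vn [Tvs cvs cE Wvn cN]]] := H4iii 0 v sg hn h0b e1 Hsg Hhn e2.
have Tvn n : T (sg n)%:E (vn n) by exact: ((HW _ (sgE n) (hn n) (Hhn n)).2 _ (Wvn n)).
have Tsub n x y : T (sg n)%:E x -> T (sg n)%:E y -> T (sg n)%:E (x - y).
  move=> Tx Ty; have [[[_ Hadd Hsc] _] _ _] := HT _ (sgE n).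
  by rewrite -scaleN1r; apply: Hadd => //; apply: Hsc.
have Npos n x : T (sg n)%:E x -> 0 <= N (sg n)%:E x.
  by move=> Tx; have [[_ [Hp _ _]] _ _] := HT _ (sgE n); have [] := Hp x Tx.
have Ntri n x y : T (sg n)%:E x -> T (sg n)%:E y ->
    N (sg n)%:E (x + y) <= N (sg n)%:E x + N (sg n)%:E y.
  by move=> Tx Ty; have [[_ [_ _ Ht]] _ _] := HT _ (sgE n); exact: Ht.
have cEn : (fun n => E (sg n)%:E (vn n)) @ \oo --> E +oo%E v.
  pose B := E +oo%E v + 1.
  have [K HK] := @coerc_bound R p alpha B psi p1 a0 psilim.
  have [C HC] := @phi_bounded R phi (K + 1) cphi.
  have cD : (fun n => E (sg n)%:E (vn n) - E (sg n)%:E (vs n)) @ \oo --> (0 : R).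
    apply/cvgr0Pnorm_lt => eps eps0.
    have /cvgrPdist_lt/(_ 1 ltr01) H1 := cE.
    have Cp : 0 < `|C| + 1 by rewrite ltr_pwDr // ltr01.
    have m0 : 0 < Num.min 1 (eps / (`|C| + 1)).
      by rewrite lt_min ltr01 divr_gt0.
    have /cvgr0Pnorm_lt/(_ _ m0) H2 := cN.
    near=> n.
    have h1 : `|E +oo%E v - E (sg n)%:E (vs n)| < 1 by near: n; exact: H1.
    have h2 : `|N (sg n)%:E (vn n - vs n)| < Num.min 1 (eps / (`|C| + 1)).
      by near: n; exact: H2.
    rewrite lt_min in h2; move/andP: h2 => [h21 h22].
    have Tvd := Tsub n _ _ (Tvn n) (Tvs n).
    have Nd0 := Npos n _ Tvd.
    have Ns0 := Npos n _ (Tvs n).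
    have Nn0 := Npos n _ (Tvn n).
    rewrite ger0_norm // in h21 h22.
    have Evs : E (sg n)%:E (vs n) <= B.
      rewrite distrC in h1; have := ler_norm (E (sg n)%:E (vs n) - E +oo%E v); rewrite /B; lra.
    have NvsK : N (sg n)%:E (vs n) <= K.
      apply: HK => //; apply: le_trans (Hcoerc _ (sgE n) _ (Tvs n)) _.
      by rewrite lerD2r.
    have NvnK : N (sg n)%:E (vn n) <= K + 1.
      have := Ntri n _ _ Tvd (Tvs n); rewrite subrK; lra.
    have Hp := Hphi _ (sgE n) _ _ (Tvn n) (Tvs n).
    have HCb := HC _ _ (andP_intro _ _ Nn0 NvnK) (andP_intro _ _ Ns0 (ler_wpDr ler01 NvsK)).
    have Cn := ler_norm C.
    rewrite ltr_pdivlMr // in h22.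
    have Cn0 : 0 <= `|C| by [].
    set x := phi _ in Hp HCb; set d := N _ (vn n - vs n) in Hp Nd0 h21 h22 *.
    apply: le_lt_trans Hp _.
    nra.
  have -> : (fun n => E (sg n)%:E (vn n))
      = (fun n => (E (sg n)%:E (vn n) - E (sg n)%:E (vs n)) + E (sg n)%:E (vs n)).
    by apply: funext => n; rewrite subrK.
  rewrite -[X in _ --> X]add0r; exact: cvgD.
have cvn : vn @ \oo --> v.
  apply/cvgrPdist_lt => eps eps0.
  have /cvgr0Pnorm_lt/(_ (eps / 2)) H1 := cvs.
  have /cvgr0Pnorm_lt/(_ (M1 * eps / 2)) H2 := cN.
  near=> n.
  have h1 : `| `|vs n - v| | < eps / 2 by near: n; apply: H1; lra.
  have h2 : `|N (sg n)%:E (vn n - vs n)| < M1 * eps / 2.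
    by near: n; apply: H2; rewrite -mulrA; apply: mulr_gt0 => //; lra.
  have h3 := HM1 _ (sgE n) _ (Tsub n _ _ (Tvn n) (Tvs n)).
  have -> : v - vn n = (v - vs n) + (vs n - vn n) by rewrite addrA subrK.
  apply: le_lt_trans (ler_normD _ _) _.
  rewrite normr_id distrC in h1; rewrite (distrC (vs n)).
  have := ler_norm (N (sg n)%:E (vn n - vs n)).
  set x := `|vn n - vs n| in h3 *; set d := N _ _ in h2 h3 *.
  move=> h4.
  nra.
exists vn; split => //.
have -> : (fun n => Edisc (W (sg n)%:E (hn n)) (E (sg n)%:E) (vn n))
    = (fun n => (E (sg n)%:E (vn n))%:E).
  by apply: funext => n; rewrite /Edisc /ext_inf asboolT.
rewrite /ext_inf asboolT // (cvg_limn_einf_sup (l := (E +oo%E v)%:E) _).2 //.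
by apply: cvg_EFin; [exact: nearW|].
Unshelve. all: by end_near. Qed.
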